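(* Let $\mathcal{X}$ be an infinite instance domain, $l\ge0$ an integer, and $\mathcal{C}^l$ the class of unions of at most $l$ singletons. Then for every integer $t\ge0$, $\mathcal{S}(\mathcal{C}^l,t)=\binom{t}{\le l}$.
   Context: $\mathcal{C}^l$ is the class of functions $\mathcal{X}\to\{-1,+1\}$ of the form $x\mapsto1-2I(x\in D)$ with $D\subseteq\mathcal{X}$, $|D|\le l$. $\binom{t}{\le l}=\sum_{i=0}^{l}\binom{t}{i}$. For a depth-$t$ $\mathcal{X}$-valued tree $\mathbf{x}=(\mathbf{x}_1,\dots,\mathbf{x}_t)$, $\mathbf{x}_s:\{\pm1\}^{s-1}\to\mathcal{X}$, let $S(\mathcal{H},\mathbf{x})=\{\epsilon\in\{\pm1\}^t:\exists h\in\mathcal{H},\ \epsilon_s=h(\mathbf{x}_s(\epsilon_1,\dots,\epsilon_{s-1}))\ \forall s\}$ and $\mathcal{S}(\mathcal{H},t)=\max_{\mathbf{x}}|S(\mathcal{H},\mathbf{x})|$ for $t\ge1$; $\mathcal{S}(\mathcal{H},0)=1$ if $\mathcal{H}\ne\emptyset$. *)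

(* Defs.v *)
From mathcomp Require Import all_boot.
From mathcomp Require Import boolp.
Set Implicit Arguments. Unset Strict Implicit. Unset Printing Implicit Defensive.

(* Signs {-1,+1} are encoded as bool: true = +1, false = -1. *)

Definition infinite_type (X : eqType) : Prop :=
  forall s : seq X, exists x, x \notin s.

(* h_D : x |-> 1 - 2 I(x \in D), i.e. +1 (true) iff x \notin D. *)
Definition Cl (X : eqType) (l : nat) (h : X -> bool) : Prop :=
  exists D : seq X, size (undup D) <= l /\ forall x, h x = (x \notin D).

(* A depth-t X-valued tree: x_s(eps_1..eps_{s-1}) is represented by
   tr [:: eps_1; ...; eps_{s-1}]  (only prefixes of length < t are used). *)
Definition tree (X : Type) := seq bool -> X.

(* eps realized on tree tr by some h in H (indices 0-based: s = 0..t-1). *)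
Definition realized (X : Type) (H : (X -> bool) -> Prop) (t : nat)
    (tr : tree X) (e : t.-tuple bool) : Prop :=
  exists h, H h /\ forall s, s < t -> nth false e s = h (tr (take s e)).

Definition Sset (X : Type) (H : (X -> bool) -> Prop) (t : nat) (tr : tree X)
  : {set t.-tuple bool} := [set e | `[< realized H tr e >]].

(* S(H, t) = max over trees of |S(H, x)| (at most 2^t). For t = 0 this gives
   1 when H is nonempty, as in the paper. *)
Definition Sgrowth (X : Type) (H : (X -> bool) -> Prop) (t : nat) : nat :=
  \max_(n < (2 ^ t).+1 | `[< exists tr : tree X, #|Sset H t tr| = n >]) n.

Definition binom_le (t l : nat) : nat := \sum_(i < l.+1) 'C(t, i).

(* Main.v *)
Require Import Defs.
From mathcomp Require Import all_boot.
From mathcomp Require Import boolp.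
Set Implicit Arguments. Unset Strict Implicit. Unset Printing Implicit Defensive.

Section Up.
Variables (X : eqType) (l t : nat) (tr : tree X).

Definition Pe (e : t.-tuple bool) : {set 'I_t} :=
  [set i : 'I_t | ~~ nth false e i &&
     all (fun j => tr (take j e) != tr (take i e)) (iota 0 i)].

Definition PnOf (P : {set 'I_t}) : pred nat := [pred n | [exists i in P, val i == n]].

Definition bitf (Pn : pred nat) (b : seq bool) : bool :=
  ~~ ((size b \in Pn) ||
      has (fun j => ~~ nth false b j && (tr (take j b) == tr b)) (iota 0 (size b))).

Fixpoint dec (Pn : pred nat) n : seq bool :=
  match n with 0 => [::] | n.+1 => let b := dec Pn n in rcons b (bitf Pn b) end.

Lemma dec0 Pn : dec Pn 0 = [::]. Proof. by []. Qed.
Lemma decS Pn n : dec Pn n.+1 = rcons (dec Pn n) (bitf Pn (dec Pn n)). Proof. by []. Qed.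

Lemma inPn (P : {set 'I_t}) (i : 'I_t) : (val i \in PnOf P) = (i \in P).
Proof.
rewrite inE; apply/existsP/idP => [[j /andP[jP /eqP/val_inj <-]] //|iP].
by exists i; rewrite iP eqxx.
Qed.

Lemma dec_ok (e : t.-tuple bool) : realized (Cl l) tr e ->
  forall n, n <= t -> dec (PnOf (Pe e)) n = take n e.
Proof.
case=> h [_ hh]; elim=> [|n IH] nt; first (rewrite dec0 take0; reflexivity).
have nt' : n < t := nt.
rewrite decS (IH (ltnW nt')) (take_nth false); last by rewrite size_tuple.
congr rcons.
have sz : size (take n e) = n by rewrite size_takel // size_tuple ltnW.
rewrite /bitf sz.
have E : has (fun j => ~~ nth false (take n e) j && (tr (take j (take n e)) == tr (take n e))) (iota 0 n)
  = has (fun j => ~~ nth false e j && (tr (take j e) == tr (take n e))) (iota 0 n).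
  apply: eq_in_has => j; rewrite mem_iota add0n => /andP[_ jn].
  by rewrite nth_take // take_takel // ltnW.
rewrite E.
have -> : n = val (Ordinal nt') by [].
rewrite inPn inE /=.
set x := tr (take n e).
have hn := hh n nt'; rewrite -/x in hn.
case Hx: (h x); rewrite hn Hx /=.
  apply/hasP => -[j]; rewrite mem_iota add0n => /andP[_ jn].
  rewrite hh ?(ltn_trans jn nt') // => /andP[hj /eqP Ej].
  by rewrite Ej Hx in hj.
case Hh: has; rewrite ?orbT //= orbF.
apply/allP => j jin; apply/negP => /eqP Ej.
move/hasPn: Hh => /(_ j jin); move: jin; rewrite mem_iota add0n => /andP[_ jn].
by rewrite hh ?(ltn_trans jn nt') // Ej Hx eqxx.
Qed.

Lemma Pe_card (e : t.-tuple bool) : realized (Cl l) tr e -> #|Pe e| <= l.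
Proof.
case=> h [[D [sD hD]] hh].
rewrite cardE -(size_map (fun i : 'I_t => tr (take i e))).
apply: leq_trans sD; apply: uniq_leq_size.
  rewrite map_inj_in_uniq ?enum_uniq // => i j; rewrite !mem_enum !inE.
  move=> /andP[_ ai] /andP[_ aj] Eij.
  case: (ltngtP (val i) (val j)) => [ij|ji|/val_inj //].
    by move/allP: aj => /(_ (val i)); rewrite mem_iota add0n ij Eij eqxx => /(_ isT).
  by move/allP: ai => /(_ (val j)); rewrite mem_iota add0n ji Eij eqxx => /(_ isT).
move=> y /mapP[i]; rewrite mem_enum inE => /andP[ni _] ->.
rewrite mem_undup; move: ni; rewrite hh // hD; by case: (_ \in D).
Qed.

Lemma upper : #|Sset (Cl l) t tr| <= #|[set P : {set 'I_t} | #|P| <= l]|.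
Proof.
rewrite -(@card_in_imset _ _ Pe (Sset (Cl l) t tr)).
  apply: subset_leq_card; apply/subsetP => _ /imsetP[e ein ->].
  rewrite inE; apply: Pe_card; move: ein; rewrite inE; exact: asboolW.
move=> e1 e2; rewrite !inE => /asboolW r1 /asboolW r2 E.
apply: val_inj => /=.
have E1 := dec_ok r1 (leqnn t); have E2 := dec_ok r2 (leqnn t).
rewrite take_oversize ?size_tuple // in E1.
rewrite take_oversize ?size_tuple // in E2.
rewrite -E1 -E2 E; reflexivity.
Qed.
End Up.

Lemma exists_uniq (X : eqType) (HX : infinite_type X) n :
  exists s : seq X, uniq s /\ size s = n.
Proof.
elim: n => [|n [s [us ss]]]; first by exists [::].
have [x xs] := HX s; exists (x :: s) => /=; by rewrite xs us ss.
Qed.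

Lemma card_Q t l : #|[set P : {set 'I_t} | #|P| <= l]| = binom_le t l.
Proof.
elim: l => [|l IH].
  rewrite /binom_le big_ord_recr big_ord0 /= add0n -[in RHS](card_ord t) -card_draws.
  by apply: eq_card => P; rewrite !inE leqn0.
rewrite /binom_le big_ord_recr /= -/(binom_le t l) -IH.
rewrite -(cardsID [set P : {set 'I_t} | #|P| <= l] [set P : {set 'I_t} | #|P| <= l.+1]).
rewrite -[in 'C(t, _)](card_ord t) -card_draws.
congr addn; apply: eq_card => P; rewrite !inE.
  by case: (leqP #|P| l) => H; rewrite ?andbT ?andbF // (leq_trans H).
case: (leqP #|P| l) => H /=.
  by apply/esym/negbTE; rewrite neq_ltn ltnS H.
by rewrite eqn_leq H andbT.
Qed.

Section Low.
Variables (X : eqType) (l t : nat) (s : seq X) (x0 : X).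
Hypotheses (us : uniq s) (ss : size s = t).

Definition trL : tree X := fun p => nth x0 s (size p).
Definition encs (P : {set 'I_t}) : seq bool :=
  mkseq (fun k => ~~ [exists i in P, val i == k]) t.
Lemma encsP P : size (encs P) == t. Proof. by rewrite size_mkseq. Qed.
Definition enc P : t.-tuple bool := Tuple (encsP P).

Lemma ex_in (P : {set 'I_t}) (i : 'I_t) : [exists j in P, val j == val i] = (i \in P).
Proof.
apply/existsP/idP => [[j /andP[jP /eqP/val_inj <-]] //|iP].
by exists i; rewrite iP eqxx.
Qed.

Lemma enc_inj : injective enc.
Proof.
move=> P1 P2 E; apply/setP => i.
have := congr1 (fun e : t.-tuple bool => nth false e i) E.
rewrite /= !nth_mkseq // !ex_in => /negb_inj //.
Qed.

Lemma enc_real (P : {set 'I_t}) : #|P| <= l -> realized (Cl l) trL (enc P).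
Proof.
move=> Pl.
pose D := [seq nth x0 s (val i) | i <- enum P].
exists (fun x => x \notin D); split.
  exists D; split => //; apply: leq_trans (size_undup _) _.
  by rewrite size_map -cardE.
move=> k kt.
change (nth false (encs P) k = (nth x0 s (size (take k (encs P))) \notin D)).
rewrite /encs nth_mkseq; last exact: kt.
rewrite size_takel; last by rewrite size_mkseq ltnW.
have -> : k = val (Ordinal kt) by [].
rewrite ex_in; congr negb.
rewrite /D (@mem_map _ _ (fun i : 'I_t => nth x0 s (val i))) ?mem_enum // => i j /eqP.
by rewrite nth_uniq ?ss ?ltn_ord // => /eqP/val_inj.
Qed.

Lemma lower : #|[set P : {set 'I_t} | #|P| <= l]| <= #|Sset (Cl l) t trL|.
Proof.
rewrite -(card_imset _ enc_inj); apply: subset_leq_card.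
apply/subsetP => _ /imsetP[P PQ ->]; move: PQ; rewrite inE => Pl.
by rewrite inE; apply/asboolP; apply: enc_real.
Qed.
End Low.

Theorem mainTheorem18 (X : eqType) (HX : infinite_type X) (l t : nat) :
  Sgrowth (Cl (X := X) l) t = binom_le t l.
Proof.
have [s [us ss]] := exists_uniq HX t.
have [x0 _] := HX [::].
set tr0 := trL s x0.
have Eq : #|Sset (Cl l) t tr0| = binom_le t l.
  apply/eqP; rewrite eqn_leq -card_Q upper /=.
  exact: lower.
have bt : binom_le t l < (2 ^ t).+1.
  rewrite ltnS -Eq; apply: leq_trans (max_card _) _.
  by rewrite card_tuple card_bool.
apply/eqP; rewrite eqn_leq; apply/andP; split.
  apply/bigmax_leqP => i /asboolP [tr <-]; rewrite -card_Q; exact: upper.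
apply: (@leq_bigmax_cond _ _ (fun n : 'I_(2 ^ t).+1 => val n) (Ordinal bt)).
by apply/asboolP; exists tr0.
Qed.
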